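(* Let $G$ be a graph and let $\mathcal{P} = \{V_1,\dots,V_k\}$ be a partition of $V(G)$ such that $|V_i| > 2\Delta(G)$ for all $i \in [k-1]$. Then for any $v_k, v_k' \in V_k$ there exists an independent transversal $T$ of $\{V_1,\dots,V_{k-1}\}$ such that both $T \cup \{v_k\}$ and $T\cup\{v_k'\}$ are independent transversals of $\mathcal{P}$.
   Context: Given a graph $G$ and a collection $\mathcal{Q}=\{W_1,\dots,W_m\}$ of pairwise disjoint subsets of $V(G)$: a transversal of $\mathcal{Q}$ is a set $S \subseteq \bigcup_i W_i$ with $|S \cap W_i| = 1$ for every $i\in[m]$; an independent transversal of $\mathcal{Q}$ is a transversal of $\mathcal{Q}$ that is an independent set in $G$. $\Delta(G)$ is the maximum degree of $G$. *)

(* Defs.v *)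
(* A simple graph G is a symmetric irreflexive relation e on a finType T. *)
From mathcomp Require Import all_boot.
Set Implicit Arguments. Unset Strict Implicit. Unset Printing Implicit Defensive.

Definition maxdeg (T : finType) (e : rel T) : nat :=
  \max_(x : T) #|[set y | e x y]|.

Definition independent (T : finType) (e : rel T) (S : {set T}) : Prop :=
  forall x y, x \in S -> y \in S -> ~~ e x y.

Definition transversal (T : finType) (I : finType) (W : I -> {set T}) (S : {set T}) : Prop :=
  S \subset \bigcup_(i : I) W i /\ forall i : I, #|S :&: W i| = 1.

Definition indep_transversal (T : finType) (e : rel T) (I : finType)
  (W : I -> {set T}) (S : {set T}) : Prop :=
  transversal W S /\ independent e S.

(* Main.v *)
Require Import Defs.
From mathcomp Require Import all_boot.
From mathcomp Require Import zify.
From Stdlib Require Import Classical.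

Set Implicit Arguments. Unset Strict Implicit. Unset Printing Implicit Defensive.

Lemma exmin (P : nat -> Prop) : (exists n, P n) -> exists n, P n /\ forall m, P m -> n <= m.
Proof.
case=> n; elim: n {-2}n (leqnn n) => [|k IH] n Hn Pn.
  exists n; split=> // m _; move: Hn; rewrite leqn0 => /eqP->; done.
case: (classic (exists m, m < n /\ P m)) => [[m [Hm Pm]]|H].
  by apply: (IH m) => //; lia.
exists n; split=> // m Pm; rewrite leqNgt; apply/negP => Hmn; apply: H; by exists m.
Qed.

Lemma card_bigcup_seq_le (T : finType) (A : Type) (s : seq A) (F : A -> {set T}) (d : nat) :
  (forall a, #|F a| <= d) -> #|\bigcup_(c <- s) F c| <= d * size s.
Proof.
move=> Hd; elim: s => [|a s IH]; first by rewrite big_nil cards0.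
rewrite big_cons /=; have [H _] := leq_card_setU (F a) (\bigcup_(c <- s) F c).
have := Hd a; lia.
Qed.

Lemma card_bigcup_disj (T I : finType) (W : I -> {set T}) (r : seq I) :
  (forall i j, i != j -> [disjoint W i & W j]) -> uniq r ->
  #|\bigcup_(i <- r) W i| = \sum_(i <- r) #|W i|.
Proof.
move=> Hd; elim: r => [|a r IH] /=; first by rewrite !big_nil cards0.
case/andP=> ar ur; rewrite !big_cons -IH // cardsU.
suff ->: W a :&: \bigcup_(i <- r) W i = set0 by rewrite cards0 subn0.
apply/setP=> x; rewrite !inE; apply/negP=> /andP[xa].
rewrite bigcup_seq => /bigcupP[i ir xi].
have ai : a != i by apply/eqP=> E; rewrite E ir in ar.
by rewrite (disjointFr (Hd _ _ ai) xa) in xi.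
Qed.
Section Haxell.
Variables (T : finType) (e : rel T) (I : finType) (W : I -> {set T}) (D : nat).
Hypothesis e_sym : symmetric e.
Hypothesis e_irr : irreflexive e.
Hypothesis deg : forall x, #|[set y | e x y]| <= D.
Hypothesis Wdisj : forall i j, i != j -> [disjoint W i & W j].
Hypothesis Hcount : forall J : {set I}, J != set0 ->
  2 * D * (#|J| - 1) < #|\bigcup_(i in J) W i|.

Definition Nb x := [set y | e x y].

Lemma W_uniq i j x : x \in W i -> x \in W j -> i = j.
Proof.
move=> xi xj; apply/eqP; apply/negPn/negP => ij.
by rewrite (disjointFr (Wdisj ij) xi) in xj.
Qed.

Definition PIT (J : {set I}) (M : {set T}) :=
  [/\ M \subset \bigcup_(i in J) W i, independent e M &
      forall i, i \in J -> #|M :&: W i| = 1].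

Lemma PIT_out J M i : PIT J M -> i \notin J -> M :&: W i = set0.
Proof.
case=> HS _ _ iJ; apply/setP=> x; rewrite !inE; apply/negP=> /andP[xM xi].
have /bigcupP[j jJ xj] := subsetP HS x xM.
by rewrite (W_uniq xi xj) jJ in iJ.
Qed.

Lemma PIT_one J M i x : PIT J M -> i \in J -> x \in M -> x \in W i -> M :&: W i = [set x].
Proof.
case=> _ _ H iJ xM xi; have /eqP/cards1P[z Ez] := H i iJ.
have : x \in M :&: W i by rewrite inE xM xi.
by rewrite Ez inE => /eqP ->.
Qed.

Lemma noadj y M b : #|Nb y :&: M| = 0 -> b \in M -> ~~ e y b.
Proof.
move/cards0_eq => E bM; apply/negP => eyb.
have : b \in Nb y :&: M by rewrite !inE eyb bM.
by rewrite E inE.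
Qed.

Definition cfgT := (T * T * nat * I)%type.
Definition cx (c : cfgT) := c.1.1.1.
Definition cy (c : cfgT) := c.1.1.2.
Definition cm (c : cfgT) := c.1.2.
Definition cp (c : cfgT) := c.2.

Section Stage.
Variables (n : I) (J' : {set I}).
Hypothesis nJ' : n \notin J'.

Definition Aset (cfg : seq cfgT) := \bigcup_(i in n |: [set i | i \in map cp cfg]) W i.
Definition Dom (cfg : seq cfgT) := \bigcup_(c <- cfg) (Nb (cx c) :|: Nb (cy c)).
Definition fit (cfg : seq cfgT) (M : {set T}) := forall c, c \in cfg -> cx c \in M /\ #|Nb (cy c) :&: M| = cm c.
Definition cand cfg (M : {set T}) y := [/\ PIT J' M, fit cfg M, y \in Aset cfg & y \notin Dom cfg].
Definition stageok cfg (c : cfgT) :=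
  [/\ cy c \in Aset cfg, cy c \notin Dom cfg, e (cy c) (cx c) & cx c \in W (cp c)] /\
  [/\ cp c \in J', cp c \notin map cp cfg, 0 < cm c &
      forall M y, cand cfg M y -> cm c <= #|Nb y :&: M|].
Definition valid cfg := forall pre c post, cfg = pre ++ c :: post -> stageok pre c.

Lemma bigcup_seq_sub (A : eqType) (s : seq A) (F : A -> {set T}) c :
  c \in s -> F c \subset \bigcup_(c <- s) F c.
Proof.
elim: s => [//|a s IH]; rewrite inE big_cons => /predU1P [->|/IH H].
  exact: subsetUl.
exact: subset_trans H (subsetUr _ _).
Qed.

Lemma Dom_x cfg c y : c \in cfg -> e (cx c) y -> y \in Dom cfg.
Proof.
by move=> cin H; apply: (subsetP (bigcup_seq_sub _ cin)); rewrite !inE H.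
Qed.
Lemma Dom_y cfg c y : c \in cfg -> e (cy c) y -> y \in Dom cfg.
Proof.
by move=> cin H; apply: (subsetP (bigcup_seq_sub _ cin)); rewrite !inE H orbT.
Qed.

Lemma valid_nil : valid [::].
Proof. by move=> [|??] ?? . Qed.

Lemma valid_nth cfg c0 l : valid cfg -> l < size cfg -> stageok (take l cfg) (nth c0 cfg l).
Proof.
move=> Hv ls; apply: (Hv _ _ (drop l.+1 cfg)).
by rewrite -{1}(cat_take_drop l cfg) (drop_nth c0).
Qed.

Lemma valid_mem cfg c : valid cfg -> c \in cfg -> stageok (take (index c cfg) cfg) c.
Proof.
move=> Hv cin; have := valid_nth c Hv (etrans (index_mem c cfg) cin); by rewrite nth_index.
Qed.

Lemma valid_rcons cfg c : valid cfg -> stageok cfg c -> valid (rcons cfg c).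
Proof.
move=> Hv Hc pre c' post; case/lastP: post => [|post z].
  by rewrite cats1 => /rcons_inj [<- <-].
rewrite -rcons_cons -rcons_cat => /rcons_inj [E _].
exact: (Hv _ _ _ E).
Qed.

Lemma valid_rconsE cfg c : valid (rcons cfg c) -> valid cfg /\ stageok cfg c.
Proof.
move=> Hv; split; last by apply: (Hv cfg c [::]); rewrite cats1.
move=> pre c' post E; apply: (Hv pre c' (rcons post c)).
by rewrite E rcons_cat.
Qed.

Lemma valid_ps cfg : valid cfg -> uniq (map cp cfg) /\ {subset map cp cfg <= J'}.
Proof.
elim/last_ind: cfg => [|cfg c IH] Hv; first by split.
case: (valid_rconsE Hv) => Hv' [_ [cJ cn _ _]].
case: (IH Hv') => U S; rewrite map_rcons rcons_uniq cn U; split=> // p.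
by rewrite mem_rcons inE => /predU1P [->|/S].
Qed.

Lemma size_bound cfg : valid cfg -> size cfg <= #|J'|.
Proof.
case/valid_ps => U S; rewrite -(size_map cp) -(card_uniqP U).
by apply: subset_leq_card; apply/subsetP.
Qed.

Lemma exists_undom cfg : valid cfg -> exists y, y \in Aset cfg /\ y \notin Dom cfg.
Proof.
move=> Hv; case: (valid_ps Hv) => U S.
have HD : #|Dom cfg| <= (2 * D) * size cfg.
  apply: card_bigcup_seq_le => c.
  have [H _] := leq_card_setU (Nb (cx c)) (Nb (cy c)).
  move: H; have := deg (cx c); have := deg (cy c); rewrite /Nb; lia.
have nS : n \notin [set i | i \in map cp cfg].
  by rewrite inE; apply/negP => /S; rewrite (negbTE nJ').
have HK : #|n |: [set i | i \in map cp cfg]| = (size cfg).+1.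
  by rewrite cardsU1 nS cardsE (card_uniqP U) size_map.
have K0 : n |: [set i | i \in map cp cfg] != set0.
  by apply/set0Pn; exists n; rewrite setU11.
have HA := Hcount K0; rewrite HK /= subn1 /= in HA.
have : ~~ (Aset cfg \subset Dom cfg).
  apply/negP => /subset_leq_card; rewrite /Aset => HH.
  have : 2 * D * size cfg < #|Dom cfg| := leq_trans HA HH.
  by move=> H; have := leq_trans H HD; rewrite ltnn.
by case/subsetPn => y yA yD; exists y.
Qed.

Lemma PIT_ext y M : PIT J' M -> y \in W n -> #|Nb y :&: M| = 0 -> PIT (n |: J') (y |: M).
Proof.
move=> HM yn y0; have [HS Hi Hc] := HM; split.
- apply/subsetP=> z; rewrite !inE => /predU1P [->|zM].
    by apply/bigcupP; exists n; rewrite ?setU11.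
  have /bigcupP[i iJ zi] := subsetP HS z zM.
  by apply/bigcupP; exists i; rewrite // inE iJ orbT.
- move=> a b; rewrite !inE => /predU1P [->|aM] /predU1P [->|bM].
  + by rewrite e_irr.
  + exact: noadj y0 bM.
  + by rewrite e_sym; exact: noadj y0 aM.
  + exact: Hi.
- move=> i; rewrite !inE => /predU1P [->|iJ].
    have E := PIT_out HM nJ'.
    suff -> : (y |: M) :&: W n = [set y] by rewrite cards1.
    apply/setP=> z; rewrite !inE; case: (z =P y) => [->|_] /=; first by rewrite yn.
    by have := congr1 (fun A : {set T} => z \in A) E; rewrite !inE => ->.
  suff -> : (y |: M) :&: W i = M :&: W i by exact: Hc.
  apply/setP=> z; rewrite !inE; case: (z =P y) => [->|_] //=.
  case yi: (y \in W i); rewrite ?andbF //.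
  by have E := W_uniq yn yi; move: nJ'; rewrite E iJ.
Qed.

Lemma step cfg M : valid cfg -> PIT J' M -> fit cfg M ->
  (exists S, PIT (n |: J') S) \/
  (exists c M1, [/\ valid (rcons cfg c), PIT J' M1 & fit (rcons cfg c) M1]).
Proof.
move=> Hv HM Hf.
have [y0 [y0A y0D]] := exists_undom Hv.
have [m [[M1 [y1 [Hc1 Hm]]] Hmin]] :=
  @exmin (fun m => exists M1 y1, cand cfg M1 y1 /\ #|Nb y1 :&: M1| = m)
    (ex_intro _ _ (ex_intro _ M (ex_intro _ y0 (conj (And4 HM Hf y0A y0D) erefl)))).
have Hmin' : forall M' y', cand cfg M' y' -> m <= #|Nb y' :&: M'|.
  by move=> M' y' H; apply: Hmin; exists M', y'.
case: Hc1 => HM1 Hf1 y1A y1D.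
case: (posnP m) => [m0|mpos].
- move: y1A; rewrite /Aset => /bigcupP [i]; rewrite !inE => /predU1P [->|].
    by move=> y1n; left; exists (y1 |: M1); apply: PIT_ext; rewrite // Hm.
  move=> /mapP [cl clin ->] y1l; exfalso; clear i.
  have [[_ _ eyx xW] [pJ pn _ _]] := valid_mem Hv clin.
  set l := index cl cfg in pn.
  have [xM1 cml] := Hf1 _ clin.
  set x := cx cl in eyx xW xM1.
  have y1x : y1 != x.
    by apply/eqP => E; move: y1D; rewrite E (Dom_y clin eyx).
  have y0' : #|Nb y1 :&: M1| = 0 by rewrite Hm.
  set M' := y1 |: (M1 :\ x).
  have HM' : PIT J' M'.
    have [HS Hi Hc] := HM1; split.
    - apply/subsetP=> z; rewrite !inE => /predU1P [->|/andP [_ zM]].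
        by apply/bigcupP; exists (cp cl).
      exact: (subsetP HS).
    - move=> a b; rewrite !inE => /predU1P [->|/andP[_ aM]] /predU1P [->|/andP [_ bM]].
      + by rewrite e_irr.
      + exact: noadj y0' bM.
      + by rewrite e_sym; exact: noadj y0' aM.
      + exact: Hi.
    - move=> i iJ; case: (i =P cp cl) => [->|ni].
        have E := PIT_one HM1 pJ xM1 xW.
        suff -> : M' :&: W (cp cl) = [set y1] by rewrite cards1.
        apply/setP=> z; rewrite !inE; case: (z =P y1) => [->|_] /=; first by rewrite y1l.
        case: (z =P x) => [_|zx] //=.
        by have := congr1 (fun A : {set T} => z \in A) E; rewrite !inE => ->; apply/eqP.
      suff -> : M' :&: W i = M1 :&: W i by exact: Hc.
      apply/setP=> z; rewrite !inE; case: (z =P y1) => [->|_] /=.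
        case yi: (y1 \in W i); rewrite ?andbF //.
        by have E := W_uniq y1l yi; exfalso; apply: ni; rewrite E.
      case: (z =P x) => [->|_] //=.
      case xi: (x \in W i); rewrite ?andbF //.
      by have E := W_uniq xW xi; exfalso; apply: ni; rewrite E.
  have Hsub : forall c, c \in cfg -> Nb (cy c) :&: M' \subset Nb (cy c) :&: M1.
    move=> c cin; apply/subsetP => z; rewrite !inE => /andP [ez].
    case/predU1P => [E|/andP [_ ->]]; last by rewrite ez.
    by move: y1D; rewrite -E (Dom_y cin ez).
  have Hle : forall c, c \in cfg -> #|Nb (cy c) :&: M'| <= cm c.
    move=> c cin; have [_ <-] := Hf1 c cin; exact: subset_leq_card (Hsub c cin).
  pose Q j := (j < size cfg) && (#|Nb (cy (nth cl cfg j)) :&: M'| < cm (nth cl cfg j)).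
  have lsz : l < size cfg by rewrite index_mem.
  have Ql : Q l.
    rewrite /Q lsz nth_index //= -cml.
    have H1 : Nb (cy cl) :&: M' \subset (Nb (cy cl) :&: M1) :\ x.
      apply/subsetP => z zin; apply/setD1P; split; last exact: (subsetP (Hsub cl clin)) z zin.
      move: zin; rewrite !inE => /andP [_ /predU1P [->|/andP [] //]].
      exact: y1x.
    rewrite (cardsD1 x (Nb (cy cl) :&: M1)) !inE xM1 andbT.
    move: eyx; rewrite /Nb => eyx.
    rewrite eyx add1n ltnS.
    exact: subset_leq_card H1.
  case: (ex_minnP (ex_intro Q l Ql)) => j /andP [jsz Qj] jmin.
  have jl : j <= l := jmin l Ql.
  set cj := nth cl cfg j in Qj.
  have [[cjA cjD _ _] [_ _ _ opt]] := valid_nth cl Hv jsz.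
  have : cm cj <= #|Nb (cy cj) :&: M'|; last by rewrite leqNgt Qj.
  apply: opt; split => //.
  move=> c cin.
  have csz : size (take j cfg) = j by rewrite size_take jsz.
  have ilt : index c (take j cfg) < j by rewrite -[X in _ < X]csz index_mem.
  set i := index c (take j cfg) in ilt.
  have ci : c = nth cl cfg i by rewrite -(nth_take cl ilt) nth_index.
  have cin' : c \in cfg by apply: (mem_take cin).
  have [cM1 ccm] := Hf1 c cin'.
  split.
    rewrite !inE cM1 andbT; apply/orP; right; apply/eqP => cx_eq.
    have [[_ _ _ cW] _] := valid_mem Hv cin'.
    rewrite cx_eq in cW; have pe := W_uniq cW xW.
    move/negP: pn; apply; apply/mapP; exists c => //.
    have il : i < l by apply: leq_trans ilt jl.
    have szl : size (take l cfg) = l by rewrite size_take lsz.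
    by rewrite ci -(nth_take cl il); apply: mem_nth; rewrite szl.
  apply/eqP; rewrite eqn_leq Hle //= leqNgt -ccm; apply/negP => H.
  have : Q i by rewrite /Q -ci -ccm H andbT; apply: ltn_trans ilt jsz.
  by move/jmin; rewrite leqNgt ilt.
- right.
  have [x] : exists x, x \in Nb y1 :&: M1 by apply/card_gt0P; rewrite Hm.
  rewrite !inE => /andP [ex xM1].
  have [HS _ _] := HM1.
  have /bigcupP [p pJ xp] := subsetP HS x xM1.
  exists (x, y1, m, p), M1; split => //.
  - apply: valid_rcons => //; split; split => //.
    apply/mapP => [[c' c'in pe]].
    have [[_ _ _ cW] _] := valid_mem Hv c'in.
    have [cM _] := Hf1 _ c'in.
    rewrite -pe in cW.
    have E := PIT_one HM1 pJ xM1 xp.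
    have : cx c' \in M1 :&: W p by rewrite inE cM cW.
    rewrite E inE => /eqP cxe.
    by move: y1D; rewrite (Dom_x c'in (y := y1)) // cxe e_sym.
  - move=> c; rewrite mem_rcons inE => /predU1P [->|cin]; first by split.
    exact: Hf1.
Qed.

Lemma stage_all k cfg M : #|J'| - size cfg <= k -> valid cfg -> PIT J' M -> fit cfg M ->
  exists S, PIT (n |: J') S.
Proof.
elim: k cfg M => [|k IH] cfg M Hk Hv HM Hf;
  case: (step Hv HM Hf) => [//|[c [M1 [Hv' HM1 Hf1]]]].
- by have := size_bound Hv'; rewrite size_rcons; lia.
- apply: (IH (rcons cfg c) M1) => //.
  by have := size_bound Hv'; rewrite size_rcons; lia.
Qed.
End Stage.

Lemma PIT_nil : PIT set0 set0.
Proof. by split; [rewrite sub0set | move=> a b; rewrite inE | move=> i; rewrite inE]. Qed.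

Lemma haxell_sub k (J : {set I}) : #|J| <= k -> exists M, PIT J M.
Proof.
elim: k J => [|k IH] J HJ.
  by move: HJ; rewrite leqn0 => /eqP/cards0_eq ->; exists set0; exact: PIT_nil.
case: (set_0Vmem J) => [->|[n nJ]]; first by exists set0; exact: PIT_nil.
have HJ' : #|J :\ n| <= k by move: HJ; rewrite (cardsD1 n J) nJ.
have [M0 HM0] := IH _ HJ'.
have nJ' : n \notin J :\ n by rewrite setD11.
have [S HS] := @stage_all n (J :\ n) nJ' #|J :\ n| [::] M0 (leq_subr _ _) (@valid_nil n _) HM0 (fun c (H : c \in [::]) => False_ind _ (notF H)).
by exists S; rewrite setD1K in HS.
Qed.

Lemma haxell : exists S : {set T}, [/\ S \subset \bigcup_(i in [set: I]) W i, independent e S &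
  forall i, #|S :&: W i| = 1].
Proof.
have [S [H1 H2 H3]] := @haxell_sub #|[set: I]| [set: I] (leqnn _).
by exists S; split => // i; apply: H3; rewrite inE.
Qed.
End Haxell.

Theorem lemma2p1 (T : finType) (e : rel T) (k : nat) (V : 'I_k.+1 -> {set T})
  (e_sym : symmetric e) (e_irr : irreflexive e)
  (V_disj : forall i j : 'I_k.+1, i != j -> [disjoint V i & V j])
  (V_cover : forall x : T, exists i : 'I_k.+1, x \in V i)
  (V_big : forall i : 'I_k.+1, i != ord_max -> 2 * maxdeg e < #|V i|)
  (v v' : T) (hv : v \in V ord_max) (hv' : v' \in V ord_max) :
  exists S : {set T},
    [/\ indep_transversal e (fun i : 'I_k => V (widen_ord (leqnSn k) i)) S,
        indep_transversal e V (v |: S)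
      & indep_transversal e V (v' |: S)].
Proof.
set B := [set y | e v y] :|: [set y | e v' y].
set w := widen_ord (leqnSn k).
pose W := fun i : 'I_k => V (w i) :\: B.
have winj : injective w by move=> a b /(congr1 val) /= /val_inj.
have wmax : forall i, w i != ord_max.
  by move=> i; rewrite -val_eqE /= neq_ltn ltn_ord.
have Vuniq : forall i j x, x \in V i -> x \in V j -> i = j.
  move=> i j x xi xj; apply/eqP; apply/negPn/negP => ij.
  by rewrite (disjointFr (V_disj _ _ ij) xi) in xj.
have deg : forall x, #|[set y | e x y]| <= maxdeg e.
  move=> x; rewrite /maxdeg; exact: (@leq_bigmax _ (fun x => #|[set y | e x y]|) x).
have Vwdisj : forall i j, i != j -> [disjoint V (w i) & V (w j)].
  by move=> i j ij; apply: V_disj; apply: contra ij => /eqP /winj ->.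
have Wdisj : forall i j, i != j -> [disjoint W i & W j].
  by move=> i j ij; apply: disjointW (Vwdisj _ _ ij); apply: subsetDl.
have cB : #|B| <= 2 * maxdeg e.
  have [H _] := leq_card_setU [set y | e v y] [set y | e v' y].
  move: H; have := deg v; have := deg v'; rewrite /B; lia.
have Hcount : forall J : {set 'I_k}, J != set0 ->
    2 * maxdeg e * (#|J| - 1) < #|\bigcup_(i in J) W i|.
  move=> J J0.
  have sub : (\bigcup_(i in J) V (w i)) :\: B \subset \bigcup_(i in J) W i.
    apply/subsetP => z; rewrite inE => /andP [zB /bigcupP [i iJ zi]].
    by apply/bigcupP; exists i; rewrite // inE zB.
  have cV : #|\bigcup_(i in J) V (w i)| = \sum_(i in J) #|V (w i)|.
    by rewrite -!big_enum card_bigcup_disj // enum_uniq.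
  have sumge : #|J| * (2 * maxdeg e).+1 <= \sum_(i in J) #|V (w i)|.
    by rewrite -sum_nat_const; apply: leq_sum => i _; apply: V_big.
  have c1 := subset_leq_card sub.
  have c2 : #|(\bigcup_(i in J) V (w i)) :&: B| <= #|B| by apply: subset_leq_card; apply: subsetIr.
  rewrite cardsD in c1.
  have c3 : 0 < #|J| by rewrite card_gt0.
  move: c1 c2 c3 cV sumge cB; set X := #|\bigcup_(i in J) W i|; set Y := #|\bigcup_(i in J) V (w i)|.
  set Z := #|(\bigcup_(i in J) V (w i)) :&: B|; set Sm := \sum_(i in J) #|V (w i)|.
  nia.
have [S [HS Sind Scard]] := haxell e_sym e_irr deg Wdisj Hcount.
have SW : forall s, s \in S -> exists i, s \in V (w i) /\ s \notin B.
  move=> s sS; have /bigcupP [i _] := subsetP HS s sS.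
  by rewrite inE => /andP [sB si]; exists i.
have Smax : forall s, s \in S -> s \notin V ord_max.
  move=> s /SW [i [si _]]; apply/negP => sm.
  by have := Vuniq _ _ _ si sm; move/eqP; rewrite (negbTE (wmax i)).
have SVw : forall i, S :&: V (w i) = S :&: W i.
  move=> i; apply/setP => z; rewrite !inE.
  case zS: (z \in S) => //=; have [j [zj zB]] := SW z zS.
  by move: zB; rewrite !inE => ->.
have key : forall u, u \in V ord_max -> (forall s, s \in S -> ~~ e u s) ->
    indep_transversal e V (u |: S).
  move=> u hu nadj; split; first split.
  - apply/subsetP => z; rewrite !inE => /predU1P [->|zS].
      by apply/bigcupP; exists ord_max.
    by have [j [zj _]] := SW z zS; apply/bigcupP; exists (w j).
  - move=> i; case: (i =P ord_max) => [->|ni].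
      suff -> : (u |: S) :&: V ord_max = [set u] by rewrite cards1.
      apply/setP => z; rewrite !inE; case: (z =P u) => [->|_] /=; first by rewrite hu.
      by case zS: (z \in S) => //=; rewrite (negbTE (Smax z zS)).
    have ik : i < k.
      by have := ltn_ord i; rewrite ltnS leq_eqVlt => /orP [/eqP E|//]; exfalso; apply: ni; apply: val_inj.
    have wi : w (Ordinal ik) = i by apply: val_inj.
    suff -> : (u |: S) :&: V i = S :&: W (Ordinal ik) by apply: Scard.
    rewrite -SVw wi; apply/setP => z; rewrite !inE; case: (z =P u) => [->|_] //=.
    case ui: (u \in V i); rewrite ?andbF //.
    by exfalso; apply: ni; apply: (Vuniq _ _ _ ui hu).
  - move=> a b; rewrite !inE => /predU1P [->|aS] /predU1P [->|bS].
    + by rewrite e_irr.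
    + exact: nadj.
    + by rewrite e_sym; apply: nadj.
    + exact: Sind.
have nB : forall s, s \in S -> s \notin B.
  by move=> s /SW [j [_ ->]].
exists S; split.
- split => //; split.
  + apply/subsetP => z zS; have [j [zj _]] := SW z zS.
    by apply/bigcupP; exists j.
  + by move=> i; rewrite SVw; apply: Scard.
- apply: key => // s /nB; rewrite !inE negb_or => /andP [].
  by [].
- apply: key => // s /nB; rewrite !inE negb_or => /andP [].
  by [].
Qed.
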